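(* Let $P$ be a finite point set and $C$ a convex body in the plane, and let $\Pi$ be a convex polygon with $P\cap C\subseteq\Pi\subseteq C$. Then there is a convex polygon $\Pi'$ such that (A) $P\cap C\subseteq\Pi'\subseteq\Pi$; (B) the number of vertices of $\Pi'$ is at most twice the number of vertices of $\Pi$; and (C) every edge of $\Pi'$ lies on a line passing through two points of $P$. *)

(* Defs.v *)
(* Points of the plane are pairs (x, y) : R * R
   over an arbitrary R : realType; the topology on R * R is the product topology
   (= Euclidean topology of the plane). *)
From HB Require Import structures.
From mathcomp Require Import all_boot all_order all_algebra.
From mathcomp Require Import all_classical all_reals all_analysis.
Set Implicit Arguments. Unset Strict Implicit. Unset Printing Implicit Defensive.
Import Order.TTheory GRing.Theory Num.Theory.
Local Open Scope classical_set_scope.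
Local Open Scope ring_scope.

Section Plane.
Variable R : realType.
Local Notation pt := (R^o * R^o)%type.

Definition pcomb (t : R) (a b : pt) : pt :=
  (t * a.1 + (1 - t) * b.1, t * a.2 + (1 - t) * b.2).

Definition pconvex (S : set pt) : Prop :=
  forall a b t, S a -> S b -> 0 <= t <= 1 -> S (pcomb t a b).

Definition convex_body (C : set pt) : Prop :=
  pconvex C /\ compact C /\ interior C !=set0.

Definition phull (V : seq pt) : set pt :=
  [set x | exists w : 'I_(size V) -> R,
     (forall i, 0 <= w i) /\ \sum_(i < size V) w i = 1 /\
     x = (\sum_(i < size V) w i * (V`_i).1, \sum_(i < size V) w i * (V`_i).2)].

Definition extreme_pt (S : set pt) (x : pt) : Prop :=
  S x /\ forall a b t, S a -> S b -> 0 < t < 1 -> x = pcomb t a b -> a = b.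

(* V is the (duplicate-free) list of vertices of the convex polygon phull V:
   every point of V is an extreme point of phull V (the extreme points of phull V
   always belong to V).  The number of vertices of phull V is then size V. *)
Definition polygon_vertices (V : seq pt) : Prop :=
  uniq V /\ forall v, v \in V -> extreme_pt (phull V) v.

Definition poly_edge (Q : set pt) (a b : pt) : Prop :=
  a <> b /\ extreme_pt Q a /\ extreme_pt Q b /\
  exists (u : pt) (c : R), u <> (0, 0) /\
    u.1 * a.1 + u.2 * a.2 = c /\ u.1 * b.1 + u.2 * b.2 = c /\
    forall x, Q x -> u.1 * x.1 + u.2 * x.2 <= c.

Definition on_line (p q x : pt) : Prop :=
  (q.1 - p.1) * (x.2 - p.2) - (q.2 - p.2) * (x.1 - p.1) = 0.

End Plane.
Notation pt R := (R^o * R^o)%type.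

(* Main.v *)
Require Import Defs.
From HB Require Import structures.
From mathcomp Require Import all_boot all_order all_algebra.
From mathcomp Require Import all_classical all_reals all_analysis.
From mathcomp Require Import ring lra.
Set Implicit Arguments. Unset Strict Implicit. Unset Printing Implicit Defensive.
Import Order.TTheory GRing.Theory Num.Theory.
Local Open Scope classical_set_scope.
Local Open Scope ring_scope.

Section G1.
Variable R : realType.
Local Notation P := (pt R).

Fixpoint hullL (T : seq P) : set P :=
  match T with
  | [::] => set0
  | t :: T' => fun z => z = t \/ exists l y, [/\ 0 <= l <= 1, hullL T' y & z = pcomb l t y]
  end.

Lemma pairE (z : P) : z = (z.1, z.2). Proof. by case: z. Qed.

Lemma phull_nil (z : P) : ~ @phull R [::] z.
Proof. by move=> [w [_ [+ _]]]; rewrite big_ord0 => /eqP; rewrite eq_sym oner_eq0. Qed.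

Lemma phull_hullL T z : phull T z <-> hullL T z.
Proof.
elim: T z => [|t T IH] z.
  by split => // /phull_nil.
split.
- move=> [w [w0 [w1 ->]]].
  rewrite /= !big_ord_recl /= in w1 *.
  set l := w ord0 in w1 *.
  have l0 : 0 <= l by apply: w0.
  have sr0 : 0 <= \sum_(i < size T) w (lift ord0 i) by apply: sumr_ge0 => i _.
  have [l1|l1] := eqVneq l 1.
    left.
    have s0 : \sum_(i < size T) w (lift ord0 i) = 0.
      by move: w1; rewrite l1 => /eqP; rewrite -subr_eq0 addrC addKr => /eqP.
    have wi0 : forall i, w (lift ord0 i) = 0.
      move=> i; move/eqP: s0; rewrite psumr_eq0 => [/allP H|]; last by move=> j _; exact: w0.
      by apply/eqP; apply: H; rewrite mem_index_enum.
    rewrite l1 [t]pairE; f_equal;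
      by rewrite big1 ?addr0 ?mul1r // => i _; rewrite wi0 mul0r.
  right.
  have lt1 : l < 1 by rewrite lt_neqAle l1 /= -w1 lerDl.
  have hl : 1 - l != 0 by rewrite subr_eq0 eq_sym.
  exists l, ((1 - l)^-1 * \sum_(i < size T) w (lift ord0 i) * (T`_i).1,
             (1 - l)^-1 * \sum_(i < size T) w (lift ord0 i) * (T`_i).2).
  split.
  + by rewrite l0 ltW.
  + apply/IH; exists (fun i => (1 - l)^-1 * w (lift ord0 i)); split.
      move=> i; apply: mulr_ge0; last exact: w0.
      by rewrite invr_ge0 subr_ge0 ltW.
    split.
      rewrite -mulr_sumr.
      have -> : \sum_(i < size T) w (lift ord0 i) = 1 - l by rewrite -w1 addrC addKr.
      by rewrite mulVf.
    by f_equal; rewrite mulr_sumr; apply: eq_bigr => i _; rewrite mulrA.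
  + by rewrite /pcomb /=; f_equal; rewrite mulrA mulfV // mul1r.
- case => [->|[l [y [/andP[l0 l1] /IH [w [w0 [w1 ->]]] ->]]]].
    exists (fun i : 'I_(size T).+1 => (i == ord0)%:R); split.
      by move=> i; rewrite ler0n.
    have hL : forall i : 'I_(size T), (lift ord0 i == ord0 :> 'I_(size T).+1) = false.
      by move=> i; rewrite eq_sym (negbTE (neq_lift _ _)).
    rewrite /= !big_ord_recl /= !big1 ?addr0 ?mul1r; first by split=> //; exact: pairE.
    1-3: by move=> *; rewrite ?mul0r.
  exists (fun i : 'I_(size T).+1 => if unlift ord0 i is Some j then (1 - l) * w j else l).
  split.
    move=> i; case: unlift => [j|] //.
    by apply: mulr_ge0; [rewrite subr_ge0 | exact: w0].
  rewrite /= !big_ord_recl /= unlift_none.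
  split.
    under eq_bigr => i _ do rewrite liftK.
    by rewrite -mulr_sumr w1 mulr1 addrC subrK.
  rewrite /pcomb /=; f_equal; rewrite mulr_sumr; congr (_ + _);
    by apply: eq_bigr => i _; rewrite liftK mulrA.
Qed.

End G1.

Section G2.
Variable R : realType.
Local Notation P := (pt R).

Lemma pair_eq (a b : P) : a.1 = b.1 -> a.2 = b.2 -> a = b.
Proof. by case: a; case: b => ? ? ? ? /= -> ->. Qed.

Lemma pcomb0 (a b : P) : pcomb 0 a b = b.
Proof. by apply: pair_eq; rewrite /= mul0r add0r subr0 mul1r. Qed.

Lemma pcomb1 (a b : P) : pcomb 1 a b = a.
Proof. by apply: pair_eq; rewrite /= mul1r subrr mul0r addr0. Qed.

Lemma pcombxx t (a : P) : pcomb t a a = a.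
Proof. by apply: pair_eq; rewrite /= -mulrDl addrC subrK mul1r. Qed.

Lemma hullL_mem T (z : P) : z \in T -> hullL T z.
Proof.
elim: T => [//|t T IH]; rewrite inE => /orP[/eqP ->|/IH h]; first by left.
by right; exists 0, z; split => //; [rewrite lexx ler01 | rewrite pcomb0].
Qed.

Lemma phull_mem T (z : P) : z \in T -> phull T z.
Proof. by move=> h; apply/phull_hullL/hullL_mem. Qed.

Lemma phull_convex (T : seq P) : pconvex (phull T).
Proof.
move=> a b t [wa [wa0 [wa1 ->]]] [wb [wb0 [wb1 ->]]] /andP[t0 t1].
exists (fun i => t * wa i + (1 - t) * wb i); split.
  move=> i; apply: addr_ge0; apply: mulr_ge0 => //; by rewrite ?subr_ge0.
split.
  by rewrite big_split /= -!mulr_sumr wa1 wb1 !mulr1 addrC subrK.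
by apply: pair_eq; rewrite /= !mulr_sumr -big_split /=; apply: eq_bigr => i _; ring.
Qed.

Lemma phull_sub (X : set P) T : pconvex X -> (forall z, z \in T -> X z) -> phull T `<=` X.
Proof.
move=> cX; elim: T => [|t T IH] hT z /phull_hullL.
  by [].
case=> [->|[l [y [l01 hy ->]]]]; first by apply: hT; rewrite inE eqxx.
apply: cX => //; first by apply: hT; rewrite inE eqxx.
apply: IH; last by apply/phull_hullL.
by move=> w wT; apply: hT; rewrite inE wT orbT.
Qed.

Lemma phull_subl (T T' : seq P) : {subset T <= T'} -> phull T `<=` phull T'.
Proof. by move=> sub; apply: phull_sub; [exact: phull_convex | move=> z /sub; exact: phull_mem]. Qed.

Lemma phull_subh (T T' : seq P) : (forall z, z \in T -> phull T' z) -> phull T `<=` phull T'.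
Proof. by move=> sub; apply: phull_sub => //; exact: phull_convex. Qed.

Definition affine (f : P -> R) := forall t a b, f (pcomb t a b) = t * f a + (1 - t) * f b.

Lemma convex_ge (f : P -> R) c : affine f -> pconvex [set z | c <= f z].
Proof. move=> af a b t /= ha hb /andP[t0 t1]; rewrite af. nra. Qed.

Lemma convex_le (f : P -> R) c : affine f -> pconvex [set z | f z <= c].
Proof. move=> af a b t /= ha hb /andP[t0 t1]; rewrite af. nra. Qed.

Lemma convex_eq (f : P -> R) c : affine f -> pconvex [set z | f z = c].
Proof. move=> af a b t /= ha hb /andP[t0 t1]; rewrite af ha hb. ring. Qed.

Lemma convexI (X Y : set P) : pconvex X -> pconvex Y -> pconvex (X `&` Y).
Proof. by move=> cX cY a b t [? ?] [? ?] ht; split; [apply: cX | apply: cY]. Qed.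

Definition orient (p q z : P) : R :=
  (q.1 - p.1) * (z.2 - p.2) - (q.2 - p.2) * (z.1 - p.1).

Lemma orient_affine p q : affine (orient p q).
Proof. by move=> t a b; rewrite /orient /=; ring. Qed.

Lemma lin_affine (u : P) (c : R) : affine (fun z => u.1 * z.1 + u.2 * z.2 + c).
Proof. by move=> t a b /=; ring. Qed.

Lemma hull_notin (T : seq P) z : phull T z -> z \notin T ->
  exists a b t, [/\ phull T a, phull T b, a <> b, 0 < t < 1 & z = pcomb t a b].
Proof.
move=> /phull_hullL; elim: T z => [//|t T IH] z.
rewrite inE negb_or => -[->|[l [y [/andP[l0 l1] hy ->]]]]; first by rewrite eqxx.
move=> /andP[zt zT].
have [l0e|l0'] := eqVneq l 0.
  rewrite l0e pcomb0 in zt zT *.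
  have [a [b [s [ha hb ab s01 ->]]]] := IH y hy zT.
  have sub : {subset T <= t :: T} by move=> w wT; rewrite inE wT orbT.
  by exists a, b, s; split => //; apply: (phull_subl sub).
have [l1'|l1'] := eqVneq l 1; first by rewrite l1' pcomb1 eqxx in zt.
exists t, y, l; split.
- by apply: phull_mem; rewrite inE eqxx.
- have sub : {subset T <= t :: T} by move=> w wT; rewrite inE wT orbT.
  by apply: (phull_subl sub); apply/phull_hullL.
- by move=> ty; move: zt; rewrite ty pcombxx eqxx.
- by rewrite lt_neqAle eq_sym l0' l0 lt_neqAle l1' l1.
- by [].
Qed.

Lemma ext_in (T : seq P) z : extreme_pt (phull T) z -> z \in T.
Proof.
move=> [hz ext]; apply/negPn/negP => zT.
have [a [b [t [ha hb ab t01 e]]]] := hull_notin hz zT.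
by apply: ab; apply: (ext a b t).
Qed.

End G2.

Section G3.
Variable R : realType.
Local Notation P := (pt R).

Lemma decomp (p : P) T z : hullL T z ->
  z = p \/ exists (a : R) (y : P), [/\ 0 <= a < 1, hullL (seq.filter (predC1 p) T) y & z = pcomb a p y].
Proof.
elim: T z => [//|t T IH] z /=.
case=> [->|[l [y0 [/andP[l0 l1] hy0 ->]]]].
  have [->|tp] := eqVneq t p; first by left.
  right; exists 0, t; split; [by rewrite lexx ltr01 | | by rewrite pcomb0].
  by rewrite /=; left.
have [tp|tp] := eqVneq t p; rewrite ?tp /=.
  case: (IH _ hy0) => [->|[b [y1 [/andP[b0 b1] hy1 ->]]]]; first by left; rewrite pcombxx.
  have [l1e|l1'] := eqVneq l 1; first by left; rewrite l1e pcomb1.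
  have l1s : l < 1 by rewrite lt_neqAle l1' l1.
  right; exists (l + (1 - l) * b), y1; split => //.
    apply/andP; split; first nra.
    nra.
  by apply: pair_eq => /=; ring.
case: (IH _ hy0) => [->|[b [y1 [/andP[b0 b1] hy1 ->]]]].
  have [l0e|l0'] := eqVneq l 0; first by left; rewrite l0e pcomb0.
  have l0s : 0 < l by rewrite lt_neqAle eq_sym l0' l0.
  right; exists (1 - l), t; split.
  - by apply/andP; split; lra.
  - by left.
  - by apply: pair_eq => /=; ring.
right; exists ((1 - l) * b), (pcomb (l / (1 - (1 - l) * b)) t y1).
have hD : 0 < 1 - (1 - l) * b by nra.
have hD0 : 1 - (1 - l) * b != 0 by rewrite gt_eqF.
split.
- by apply/andP; split; nra.
- right; exists (l / (1 - (1 - l) * b)), y1; split => //.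
  apply/andP; split; first by apply: divr_ge0 => //; apply: ltW.
  by rewrite ler_pdivrMr // mul1r; nra.
- apply: pair_eq => /=; field; done.
Qed.

Lemma divcomb (D A B x y1 y2 : R) : D != 0 -> B = D - A -> D * x = A * y1 + B * y2 ->
  x = (A / D) * y1 + (1 - A / D) * y2.
Proof.
move=> D0 -> h; apply: (mulfI D0); rewrite h; field; done.
Qed.

Lemma nonext_hull (p : P) T a b t : p \in T -> phull T a -> phull T b -> 0 < t < 1 ->
  p = pcomb t a b -> a <> b -> phull (seq.filter (predC1 p) T) p.
Proof.
move=> pT /phull_hullL ha /phull_hullL hb /andP[t0 t1] e ab.
have cT := @phull_convex R (seq.filter (predC1 p) T).
case: (decomp p ha) => [ea|[al [y [/andP[al0 al1] hy ea]]]];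
case: (decomp p hb) => [eb|[be [y' [/andP[be0 be1] hy' eb]]]].
- by case: ab; rewrite ea eb.
- have e' : p = y'.
    have k : (1 - t) * (1 - be) != 0 by apply: mulf_neq0; rewrite subr_eq0 gt_eqF.
    move: e; rewrite ea eb => /(congr1 (fun z => (z.1, z.2))) [e1 e2].
    apply: pair_eq; apply: (mulfI k).
      by move: e1 => /= e1; nra.
    by move: e2 => /= e2; nra.
  by move/phull_hullL: hy'; rewrite -e'.
- have e' : p = y.
    have k : t * (1 - al) != 0 by apply: mulf_neq0; rewrite ?subr_eq0 gt_eqF.
    move: e; rewrite ea eb => /(congr1 (fun z => (z.1, z.2))) [e1 e2].
    apply: pair_eq; apply: (mulfI k).
      by move: e1 => /= e1; nra.
    by move: e2 => /= e2; nra.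
  by move/phull_hullL: hy; rewrite -e'.
- set A := t * (1 - al); set B := (1 - t) * (1 - be).
  have A0 : 0 < A by apply: mulr_gt0; lra.
  have B0 : 0 < B by apply: mulr_gt0; lra.
  have D0 : A + B != 0 by rewrite gt_eqF // addr_gt0.
  have e' : p = pcomb (A / (A + B)) y y'.
    move: e; rewrite ea eb => /(congr1 (fun z => (z.1, z.2))) [e1 e2].
    apply: pair_eq; rewrite /pcomb /=; apply: divcomb => //; rewrite ?addrK //.
      by move: e1 => /= e1; rewrite /A /B; nra.
    by move: e2 => /= e2; rewrite /A /B; nra.
  suff : phull (seq.filter (predC1 p) T) (pcomb (A / (A + B)) y y') by rewrite -e'.
  apply: cT; try by apply/phull_hullL.
  apply/andP; split; first by apply: divr_ge0; lra.
  by rewrite ler_pdivrMr ?mul1r ?addr_gt0 // lerDl ltW.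
Qed.

End G3.

Section G4.
Variable R : realType.
Local Notation P := (pt R).

Definition extl (T : seq P) : seq P :=
  undup (seq.filter (fun z => `[< extreme_pt (phull T) z >]) T).

Lemma mem_extl (T : seq P) (z : P) : (z \in extl T) = (z \in T) && `[< extreme_pt (phull T) z >].
Proof. by rewrite mem_undup mem_filter andbC. Qed.

Lemma extl_uniq (T : seq P) : uniq (extl T). Proof. exact: undup_uniq. Qed.

Lemma ext_or_hull (T : seq P) (p : P) : p \in T -> extreme_pt (phull T) p \/ phull (seq.filter (predC1 p) T) p.
Proof.
move=> pT; case: (pselect (phull (seq.filter (predC1 p) T) p)) => [h|h]; [by right|left].
split; first exact: phull_mem.
move=> a b t ha hb ht e; apply: contrapT => ab; apply: h.
exact: (nonext_hull pT ha hb ht e).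
Qed.

Lemma km_v (T : seq P) (z : P) : z \in T -> phull (extl T) z.
Proof.
move: (leqnn (size T)); move: {2}(size T) => n; elim: n T z => [|n IH] T z hT zT.
  by move: hT zT; rewrite leqn0 => /nilP ->.
case: (pselect (forall p, p \in T -> extreme_pt (phull T) p)) => [allE|].
  by apply: phull_mem; rewrite mem_extl zT; apply/asboolP; exact: allE.
move/existsNP => [p /not_implyP [pT pne]].
case: (ext_or_hull pT) => // hp.
set T' := seq.filter (predC1 p) T.
have sz : (size T' <= n)%N.
  have c0 : (0 < count (pred1 p) T)%N by rewrite -has_count has_pred1.
  have := count_predC (predC1 p) T.
  have -> : count (predC (predC1 p)) T = count (pred1 p) T.
    by apply: eq_count => x /=; rewrite negbK.
  rewrite /T' size_filter => e.
  by rewrite -ltnS; apply: leq_trans hT; rewrite -e -addn1 leq_add2l.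
have eqh : phull T' = phull T.
  rewrite eqEsubset; split.
    by apply: phull_subl => x; rewrite mem_filter => /andP[].
  apply: phull_subh => x xT; have [->|xp] := eqVneq x p => //.
  by apply: phull_mem; rewrite mem_filter /= xp.
have memE : {subset extl T' <= extl T}.
  by move=> x; rewrite !mem_extl eqh mem_filter => /andP[/andP[_ ->] ->].
apply: (phull_subl memE); apply: (phull_subh (T := T')) => [x xT'|]; first exact: IH.
have [->|zp] := eqVneq z p => //.
by apply: phull_mem; rewrite mem_filter /= zp.
Qed.

Lemma phull_extl (T : seq P) : phull (extl T) = phull T.
Proof.
rewrite eqEsubset; split.
  by apply: phull_subl => x; rewrite mem_extl => /andP[].
by apply: phull_subh => x; exact: km_v.
Qed.

Lemma extl_ext (T : seq P) (z : P) : z \in extl T -> extreme_pt (phull (extl T)) z.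
Proof. by rewrite phull_extl mem_extl => /andP[_ /asboolP]. Qed.

Lemma extl_sub (T : seq P) : {subset extl T <= T}.
Proof. by move=> x; rewrite mem_extl => /andP[]. Qed.

Definition nrm (p q : P) : R := (q.1 - p.1) ^+ 2 + (q.2 - p.2) ^+ 2.

Lemma nrm_gt0 (p q : P) : p <> q -> 0 < nrm p q.
Proof.
move=> pq; have [h1|h1] := eqVneq (q.1 - p.1) 0; have [h2|h2] := eqVneq (q.2 - p.2) 0.
- by exfalso; apply: pq; apply: pair_eq; apply/eqP; rewrite eq_sym -subr_eq0; apply/eqP.
- have : 0 < (q.2 - p.2) ^+ 2 by rewrite exprn_even_gt0 // h2 orbT.
  by rewrite /nrm h1; nra.
- have : 0 < (q.1 - p.1) ^+ 2 by rewrite exprn_even_gt0 // h1 orbT.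
  by rewrite /nrm h2; nra.
- have : 0 < (q.1 - p.1) ^+ 2 by rewrite exprn_even_gt0 // h1 orbT.
  have := sqr_ge0 (q.2 - p.2).
  by rewrite /nrm; lra.
Qed.

Definition lam (p q z : P) : R :=
  ((q.1 - p.1) * (z.1 - p.1) + (q.2 - p.2) * (z.2 - p.2)) / nrm p q.

Lemma online_param (p q z : P) : p <> q -> orient p q z = 0 ->
  z = (p.1 + lam p q z * (q.1 - p.1), p.2 + lam p q z * (q.2 - p.2)).
Proof.
move=> pq; rewrite /orient => o.
have n0 := nrm_gt0 pq; have n0' : nrm p q != 0 by rewrite gt_eqF.
set N := (q.1 - p.1) * (z.1 - p.1) + (q.2 - p.2) * (z.2 - p.2).
have o1 := congr1 (fun x => (q.2 - p.2) * x) o.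
have o2 := congr1 (fun x => (q.1 - p.1) * x) o.
have k1 : nrm p q * (z.1 - p.1) = N * (q.1 - p.1) by rewrite /nrm /N /=; nra.
have k2 : nrm p q * (z.2 - p.2) = N * (q.2 - p.2) by rewrite /nrm /N /=; nra.
apply: pair_eq; rewrite /= /lam -/N; apply/eqP; rewrite -subr_eq0.
  have -> : z.1 - (p.1 + N / nrm p q * (q.1 - p.1)) =
            (nrm p q * (z.1 - p.1) - N * (q.1 - p.1)) / nrm p q by field.
  by rewrite k1 subrr mul0r.
have -> : z.2 - (p.2 + N / nrm p q * (q.2 - p.2)) =
          (nrm p q * (z.2 - p.2) - N * (q.2 - p.2)) / nrm p q by field.
by rewrite k2 subrr mul0r.
Qed.

Lemma lam_inj (p q a b : P) : p <> q -> orient p q a = 0 -> orient p q b = 0 ->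
  lam p q a = lam p q b -> a = b.
Proof.
by move=> pq oa ob e; rewrite [LHS](online_param pq oa) [RHS](online_param pq ob) e.
Qed.

Lemma mid_comb (p q a b c : P) : p <> q -> orient p q a = 0 -> orient p q b = 0 ->
  orient p q c = 0 -> lam p q a < lam p q b < lam p q c ->
  exists2 t, 0 < t < 1 & b = pcomb t a c.
Proof.
move=> pq /(online_param pq) ea /(online_param pq) eb /(online_param pq) ec.
set la := lam p q a in ea *; set lb := lam p q b in eb *; set lc := lam p q c in ec *.
move=> /andP[h1 h2].
have d0 : lc - la != 0 by rewrite subr_eq0 gt_eqF // (lt_trans h1 h2).
exists ((lc - lb) / (lc - la)).
  apply/andP; split; first by apply: divr_gt0; lra.
  by rewrite ltr_pdivrMr ?mul1r; lra.
rewrite eb; apply: pair_eq; rewrite ea ec /=; field; done.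
Qed.

Lemma three_ext (X : set P) (p q a b c : P) : p <> q ->
  orient p q a = 0 -> orient p q b = 0 -> orient p q c = 0 ->
  a <> b -> b <> c -> a <> c ->
  extreme_pt X a -> extreme_pt X b -> extreme_pt X c -> False.
Proof.
move=> pq oa ob oc ab bc ac ea eb ec.
have key : forall x y z, orient p q x = 0 -> orient p q y = 0 -> orient p q z = 0 ->
    x <> z -> extreme_pt X x -> extreme_pt X y -> extreme_pt X z ->
    lam p q x < lam p q y < lam p q z -> False.
  move=> x y z ox oy oz xz [Xx _] [_ ey] [Xz _] h.
  have [t ht e] := mid_comb pq ox oy oz h.
  by apply: xz; apply: (ey x z t).
have nab : lam p q a != lam p q b by apply/eqP => /(lam_inj pq oa ob).
have nbc : lam p q b != lam p q c by apply/eqP => /(lam_inj pq ob oc).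
have nac : lam p q a != lam p q c by apply/eqP => /(lam_inj pq oa oc).
have bc' : c <> b by move=> e; apply: bc.
have ab' : b <> a by move=> e; apply: ab.
have ac' : c <> a by move=> e; apply: ac.
case: (ltgtP (lam p q a) (lam p q b)) nab => // hab _;
case: (ltgtP (lam p q b) (lam p q c)) nbc => // hbc _;
case: (ltgtP (lam p q a) (lam p q c)) nac => // hac _.
all: first [ by exfalso; clear -hab hbc hac; lra | by apply: (key a b c) => //; apply/andP; split; assumption | by apply: (key a c b) => //; apply/andP; split; assumption | by apply: (key b a c) => //; apply/andP; split; assumption | by apply: (key b c a) => //; apply/andP; split; assumption | by apply: (key c a b) => //; apply/andP; split; assumption | by apply: (key c b a) => //; apply/andP; split; assumption ].
Qed.

Definition NC (T : seq P) := forall p q : P, p <> q -> exists2 z, z \in T & orient p q z != 0.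

Lemma NC_hull (S T : seq P) : NC S -> (forall z, z \in S -> phull T z) -> NC T.
Proof.
move=> nc sub p q pq; have [z zS oz] := nc p q pq.
apply: contrapT => H.
have allz : forall w, w \in T -> orient p q w = 0.
  move=> w wT; apply/eqP; apply: contrapT => /negP ow; apply: H; by exists w.
have hz : phull T z := sub z zS.
have := phull_sub (@convex_eq R (orient p q) 0 (orient_affine p q)) allz hz.
by move=> /= /eqP; rewrite (negbTE oz).
Qed.

End G4.

Section G5.
Variable R : realType.
Local Notation P := (pt R).

Lemma argmin (T : eqType) (f : T -> R) (s : seq T) : s != [::] ->
  exists2 m, m \in s & forall x, x \in s -> f m <= f x.
Proof.
elim: s => [//|a s IH] _.
have [->|sn] := eqVneq s [::].
  by exists a; rewrite ?inE ?eqxx // => x; rewrite inE => /eqP ->.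
have [m ms hm] := IH sn.
have [fam|fma] := leP (f a) (f m).
  exists a; first by rewrite inE eqxx.
  move=> x; rewrite inE => /orP[/eqP ->//|/hm]; exact: le_trans.
exists m; first by rewrite inE ms orbT.
move=> x; rewrite inE => /orP[/eqP ->|/hm //]; exact: ltW.
Qed.

Lemma hull3 (X : set P) (x y z s : P) (al be ga : R) : pconvex X -> X x -> X y -> X z ->
  0 <= al -> 0 <= be -> 0 <= ga -> al + be + ga = 1 ->
  s.1 = al * x.1 + be * y.1 + ga * z.1 -> s.2 = al * x.2 + be * y.2 + ga * z.2 -> X s.
Proof.
move=> cX Xx Xy Xz a0 b0 g0 sum e1 e2.
have [g1|g1] := eqVneq ga 1.
  have a00 : al = 0 by lra.
  have b00 : be = 0 by lra.
  suff -> : s = z by [].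
  by apply: pair_eq; rewrite ?e1 ?e2 a00 b00 g1; ring.
have gl : ga < 1 by rewrite lt_neqAle g1 /=; lra.
have k : 1 - ga != 0 by rewrite subr_eq0 eq_sym.
have -> : s = pcomb (1 - ga) (pcomb (al / (1 - ga)) x y) z.
  apply: pair_eq; rewrite /= ?e1 ?e2.
    have -> : be = 1 - ga - al by lra.
    by field.
  have -> : be = 1 - ga - al by lra.
  by field.
apply: (cX) => //; last by apply/andP; split; lra.
apply: (cX) => //; apply/andP; split; first by apply: divr_ge0; lra.
by rewrite ler_pdivrMr ?mul1r; lra.
Qed.

Lemma orient_xx (s a : P) : orient s a a = 0. Proof. by rewrite /orient; ring. Qed.
Lemma orient_x0 (s a : P) : orient s a s = 0. Proof. by rewrite /orient; ring. Qed.
Lemma orient_swap (s a z : P) : orient a s z = - orient s a z. Proof. by rewrite /orient; ring. Qed.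
Lemma orient_swap2 (s a z : P) : orient s z a = - orient s a z. Proof. by rewrite /orient; ring. Qed.

Lemma sg_neq0 (sg : R) : sg ^+ 2 = 1 -> sg != 0.
Proof. by move=> h; apply/eqP => e; move: h; rewrite e expr0n /= => /eqP; rewrite eq_sym oner_eq0. Qed.

Definition dotv (s a z : P) : R := (a.1 - s.1) * (z.1 - s.1) + (a.2 - s.2) * (z.2 - s.2).

Lemma notin_of_hull (D : seq P) s : ~ phull D s -> s \notin D.
Proof. by move=> h; apply/negP => /phull_mem. Qed.

Lemma tan_weak (sg : R) (s : P) (D : seq P) : sg ^+ 2 = 1 -> D != [::] -> ~ phull D s ->
  exists2 a, a \in D & forall z, z \in D ->
    0 <= sg * orient s a z /\ (orient s a z = 0 -> 0 < dotv s a z).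
Proof.
move=> sg1; elim: D => [//|w D IH] _ hs.
have hsub : phull D `<=` phull (w :: D).
  by apply: phull_subl => x xD; rewrite inE xD orbT.
have ws : w != s.
  by apply/eqP => e; apply: hs; apply: phull_mem; rewrite e inE eqxx.
have dww : 0 < dotv s w w.
  have sw : s <> w by move=> e; move/eqP: ws; apply; rewrite e.
  by have := nrm_gt0 sw; rewrite /nrm /dotv !expr2.
have [->|Dn] := eqVneq D [::].
  exists w; first by rewrite inE eqxx.
  by move=> z; rewrite inE => /eqP ->; rewrite orient_xx mulr0 lexx; split.
have [a aD ha] := IH Dn (fun h => hs (hsub _ h)).
have hD : forall x, x \in D -> phull (w :: D) x.
  by move=> x xD; apply: phull_mem; rewrite inE xD orbT.
have hw : phull (w :: D) w by apply: phull_mem; rewrite inE eqxx.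
have as0 : a <> s by move=> e; apply: hs; apply: hD; rewrite -e.
have [pos|npos] := boolP (0 < sg * orient s a w).
  exists a; first by rewrite inE aD orbT.
  move=> z; rewrite inE => /orP[/eqP ->|/ha //].
  by split; [exact: ltW | move=> e; move: pos; rewrite e mulr0 ltxx].
have [oz|oz] := eqVneq (orient s a w) 0.
  have [dp|dn] := ltP 0 (dotv s a w).
    exists a; first by rewrite inE aD orbT.
    move=> z; rewrite inE => /orP[/eqP ->|/ha //].
    by rewrite oz mulr0 lexx.
  (* s between a and w *)
  exfalso; apply: hs.
  have ew := online_param (fun e => as0 (esym e)) oz.
  have n0 := nrm_gt0 (fun e => as0 (esym e)).
  set l := lam s a w in ew.
  have l0 : l <= 0 by rewrite /l /lam pmulr_lle0 ?invr_gt0 //.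
  apply: (@hull3 _ a w w s (- l / (1 - l)) (1 / (1 - l)) 0) => //;
    try (exact: phull_convex); try (by apply: hD).
  - by apply: divr_ge0; lra.
  - by apply: divr_ge0; lra.
  - have k : 1 - l != 0 by rewrite gt_eqF //; lra.
    by field.
  - have k : 1 - l != 0 by rewrite gt_eqF //; lra.
    by rewrite ew /=; field.
  - have k : 1 - l != 0 by rewrite gt_eqF //; lra.
    by rewrite ew /=; field.
have neg : sg * orient s a w < 0.
  rewrite lt_neqAle mulf_eq0 negb_or oz andbT (sg_neq0 sg1) /=.
  by rewrite leNgt.
exists w; first by rewrite inE eqxx.
have key : forall z, z \in D -> 0 < sg * orient s w z.
  move=> z zD; rewrite ltNge; apply/negP => hz.
  have [hz1 _] := ha z zD.
  apply: hs.
  set ca := orient s w z; set cw := - orient s a z; set cz := orient s a w.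
  have Sn : sg * (ca + cw + cz) < 0 by rewrite /ca /cw /cz; nra.
  have S0 : ca + cw + cz != 0 by apply/eqP => h; move: Sn; rewrite h mulr0 ltxx.
  have wpos : forall c, sg * c <= 0 -> 0 <= c / (ca + cw + cz).
    move=> c hc.
    have -> : c / (ca + cw + cz) = (sg * c) / (sg * (ca + cw + cz)).
      have sg0 := sg_neq0 sg1.
      by field; rewrite sg0 S0.
    by rewrite ler_ndivlMr // mul0r.
  apply: (@hull3 _ a w z s (ca / (ca + cw + cz)) (cw / (ca + cw + cz)) (cz / (ca + cw + cz)))
    => //; try (exact: phull_convex); try (by apply: hD).
  - by apply: wpos.
  - by apply: wpos; rewrite /cw; lra.
  - by apply: wpos; apply: ltW.
  - by field.
  - apply: (mulfI S0); rewrite /ca /cw /cz /orient; field; done.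
  - apply: (mulfI S0); rewrite /ca /cw /cz /orient; field; done.
move=> z; rewrite inE => /orP[/eqP ->|zD].
  by rewrite orient_xx mulr0 lexx; split.
have kz := key z zD; split; first exact: ltW.
by move=> e; move: kz; rewrite e mulr0 ltxx.
Qed.

End G5.

Section G6.
Variable R : realType.
Local Notation P := (pt R).

Definition ray (s a : P) (mu : R) : P := (s.1 + mu * (a.1 - s.1), s.2 + mu * (a.2 - s.2)).

Lemma orient_ray (s a z : P) mu : orient s (ray s a mu) z = mu * orient s a z.
Proof. by rewrite /orient /ray /=; ring. Qed.

Lemma tan (sg : R) (s : P) (D : seq P) : sg ^+ 2 = 1 -> D != [::] -> ~ phull D s ->
  exists2 a, a \in D & forall z, z \in D -> 0 <= sg * orient s a z /\
    (orient s a z = 0 -> exists2 mu, 1 <= mu & z = ray s a mu).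
Proof.
move=> sg1 Dn hs.
have [a0 a0D h0] := tan_weak sg1 Dn hs.
have sa0 : s <> a0 by move=> e; apply: hs; apply: phull_mem; rewrite e.
set D0 := seq.filter (fun z => orient s a0 z == 0) D.
have a0D0 : a0 \in D0 by rewrite mem_filter orient_xx eqxx a0D.
have D0n : D0 != [::] by apply/eqP => e; move: a0D0; rewrite e.
have [a aD0 amin] := argmin (lam s a0) D0n.
move: (aD0); rewrite mem_filter => /andP[/eqP oa aD].
have n0 := nrm_gt0 sa0.
have ea := online_param sa0 oa.
set la := lam s a0 a in ea amin.
have la0 : 0 < la.
  have [_ /(_ oa) d] := h0 a aD.
  by rewrite /la /lam divr_gt0.
exists a => // z zD.
have oz : orient s a z = la * orient s a0 z.
  by rewrite [in LHS]ea -/(ray s a0 la) orient_ray.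
have [h1 _] := h0 z zD.
split; first by rewrite oz mulrCA; apply: mulr_ge0 => //; apply: ltW.
move=> /eqP; rewrite oz mulf_eq0 (gt_eqF la0) /= => /eqP oz0.
have zD0 : z \in D0 by rewrite mem_filter oz0 eqxx zD.
have lz := amin z zD0.
exists (lam s a0 z / la).
  by rewrite ler_pdivlMr // mul1r.
rewrite [LHS](online_param sa0 oz0) /ray ea /=.
have k : la != 0 by rewrite gt_eqF.
by apply: pair_eq => /=; field.
Qed.

Lemma eav (T : seq P) (s : P) : s \in T -> extreme_pt (phull T) s -> NC T ->
  exists sp sm, [/\ sp \in T, sm \in T, sp <> s, sm <> s &
   [/\ forall z, z \in T -> 0 <= orient s sp z,
       forall z, z \in T -> 0 <= orient sm s z,
       0 < orient s sp sm &
       forall z, z \in T -> orient s sp z = 0 -> z = s \/ exists2 mu, 1 <= mu & z = ray s sp mu]].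
Proof.
move=> sT ext nc.
set D := seq.filter (predC1 s) T.
have memD : forall z, z \in T -> z <> s -> z \in D.
  by move=> z zT zs; rewrite mem_filter /= zT andbT; apply/eqP.
have Dsub : {subset D <= T} by move=> z; rewrite mem_filter => /andP[].
have Dne : forall z, z \in D -> z <> s by move=> z; rewrite mem_filter => /andP[/eqP ? _].
have Dn : D != [::].
  have q1 : s <> (s.1 + 1, s.2).
    by move=> /(congr1 fst) /= /eqP; rewrite -subr_eq0 opprD addrA subrr add0r oppr_eq0 oner_eq0.
  have [z zT oz] := nc _ _ q1.
  have zs : z <> s by move=> e; move: oz; rewrite e orient_x0 eqxx.
  by apply/eqP => e; move: (memD z zT zs); rewrite e.
have hs : ~ phull D s.
  move=> h.
  have sD : s \notin D by rewrite mem_filter /= eqxx.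
  have [a [b [t [ha hb ab t01 e]]]] := hull_notin h sD.
  by apply: ab; apply: (ext.2 a b t) => //; apply: (phull_subl Dsub).
have sg1 : (1 : R) ^+ 2 = 1 by rewrite expr1n.
have sgm : (-1 : R) ^+ 2 = 1 by rewrite sqrrN expr1n.
have [sp spD hp] := tan sg1 Dn hs.
have [sm smD hm] := tan sgm Dn hs.
have hp' : forall z, z \in T -> 0 <= orient s sp z.
  move=> z zT; have [->|zs] := eqVneq z s; first by rewrite orient_x0.
  by have [+ _] := hp z (memD z zT (fun e => (negP zs) (introT eqP e))); rewrite mul1r.
have hm' : forall z, z \in T -> 0 <= orient sm s z.
  move=> z zT; have [->|zs] := eqVneq z s; first by rewrite orient_swap orient_x0 oppr0.
  have [+ _] := hm z (memD z zT (fun e => (negP zs) (introT eqP e))).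
  by rewrite [orient sm s z]orient_swap mulN1r.
exists sp, sm; split; try by [apply: Dsub | apply: Dne].
split => //.
  rewrite lt_neqAle; apply/andP; split; last by apply: hp'; apply: Dsub.
  apply/negP => /eqP/esym o0.
  have [mu mu1 esm] := (hp sm smD).2 o0.
  have all0 : forall z, z \in D -> orient s sp z = 0.
    move=> z zD; have [h1 _] := hp z zD; have [h2 _] := hm z zD.
    move: h2; rewrite esm orient_ray mul1r in h1 *; move=> h2.
    apply/eqP; rewrite eq_le h1 andbT; nra.
  have sps : s <> sp by move=> e; apply: (Dne sp spD); rewrite e.
  have [z zT oz] := nc _ _ sps.
  have [zs0|zs] := eqVneq z s; first by move: oz; rewrite zs0 orient_x0 eqxx.
  by move: oz; rewrite all0 ?eqxx //; apply: memD => // e; move/eqP: zs.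
move=> z zT oz; have [->|zs] := eqVneq z s; first by left.
right; exact: (hp z (memD z zT (fun e => (negP zs) (introT eqP e)))).2.
Qed.

Lemma uniq_edge (T : seq P) (s p q : P) : extreme_pt (phull T) s -> p \in T -> q \in T ->
  p <> s -> q <> s ->
  (forall z, z \in T -> 0 <= orient s p z) -> (forall z, z \in T -> 0 <= orient s q z) ->
  exists2 mu, 0 < mu & forall z, orient s q z = mu * orient s p z.
Proof.
move=> ext pT qT ps qs hp hq.
have o : orient s p q = 0.
  have h1 := hp q qT; have := hq p pT; rewrite orient_swap2 => h2.
  by apply/eqP; rewrite eq_le h1 andbT; lra.
have sp : s <> p by move=> e; apply: ps.
have eq := online_param sp o.
set l := lam s p q in eq.
have [l0|l0|l0] := ltgtP l 0; last first.
- by exfalso; apply: qs; rewrite eq l0 !mul0r !addr0; case: (s).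
- exists l => // z; by rewrite [in LHS]eq -/(ray s p l) orient_ray.
exfalso.
have pq : p <> q.
  move=> e; apply: ps; apply: pair_eq.
  + by move: (congr1 fst eq); rewrite -e /= => h; nra.
  + by move: (congr1 snd eq); rewrite -e /= => h; nra.
apply: pq; apply: (ext.2 p q (- l / (1 - l))).
- exact: phull_mem.
- exact: phull_mem.
- apply/andP; split; first by apply: divr_gt0; lra.
  by rewrite ltr_pdivrMr; lra.
- have k : 1 - l != 0 by rewrite gt_eqF //; lra.
  have e1 := congr1 fst eq; have e2 := congr1 snd eq; simpl in e1, e2.
  apply: pair_eq => /=; [rewrite e1 | rewrite e2]; field; done.
Qed.

Lemma cone_dec (s sp sm z : P) : 0 < orient s sp sm -> 0 <= orient s sp z -> 0 <= orient sm s z ->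
  exists al be, [/\ 0 <= al, 0 <= be &
    z = (s.1 + al * (sp.1 - s.1) + be * (sm.1 - s.1), s.2 + al * (sp.2 - s.2) + be * (sm.2 - s.2))].
Proof.
move=> c0 h1 h2.
have k : orient s sp sm != 0 by rewrite gt_eqF.
exists (orient sm s z / orient s sp sm), (orient s sp z / orient s sp sm); split.
- by apply: divr_ge0 => //; apply: ltW.
- by apply: divr_ge0 => //; apply: ltW.
- move: k; rewrite /orient => k; apply: pair_eq => /=; field; done.
Qed.

Lemma orient_lin (a b s x y : P) al be :
  orient a b (s.1 + al * (x.1 - s.1) + be * (y.1 - s.1), s.2 + al * (x.2 - s.2) + be * (y.2 - s.2))
  = orient a b s + al * (orient a b x - orient a b s) + be * (orient a b y - orient a b s).
Proof. by rewrite /orient /=; ring. Qed.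

End G6.

Section G7.
Variable R : realType.
Local Notation P := (pt R).

Definition gj (j : P * P) (z : P) : R := orient j.1 j.2 z.
Definition Kset (J : seq (P * P)) : set P := [set z | forall j, j \in J -> 0 <= gj j z].
Definition crs (j : P * P) (d : P) : R := (j.2.1 - j.1.1) * d.2 - (j.2.2 - j.1.2) * d.1.
Definition shift (z d : P) (e : R) : P := (z.1 + e * d.1, z.2 + e * d.2).
Definition dir (j : P * P) : P := (j.2.1 - j.1.1, j.2.2 - j.1.2).

Lemma gj_shift j z d e : gj j (shift z d e) = gj j z + e * crs j d.
Proof. by rewrite /gj /orient /crs /shift /=; ring. Qed.

Lemma Kset_convex J : pconvex (Kset J).
Proof.
move=> a b t ha hb /andP[t0 t1] j jJ.
rewrite /gj orient_affine; have := ha j jJ; have := hb j jJ; rewrite /gj; nra.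
Qed.

Lemma eps_shift (J : seq (P * P)) z d : (forall j, j \in J -> 0 <= gj j z) ->
  (forall j, j \in J -> gj j z = 0 -> 0 <= crs j d) ->
  exists2 e, 0 < e & forall e', 0 <= e' <= e -> forall j, j \in J -> 0 <= gj j (shift z d e').
Proof.
elim: J => [|j J IH] hz hc.
  by exists 1 => //; rewrite ltr01.
have [e0 e00 he0] : exists2 e, 0 < e & forall e', 0 <= e' <= e -> forall j, j \in J -> 0 <= gj j (shift z d e').
  by apply: IH => [i iJ|i iJ]; [apply: hz | apply: hc]; rewrite inE iJ orbT.
have gz := hz j (mem_head _ _).
have [g0|gp] := eqVneq (gj j z) 0.
  exists e0 => // e' he' i; rewrite inE => /orP[/eqP ->|iJ]; last exact: he0.
  have cj := hc j (mem_head _ _) g0.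
  rewrite gj_shift g0 add0r; move: he' => /andP[h1 _]; exact: mulr_ge0.
have gpos : 0 < gj j z by rewrite lt_neqAle eq_sym gp gz.
set c := crs j d.
have c1 : 0 < `|c| + 1 by rewrite ltr_wpDl.
exists (Num.min e0 (gj j z / (`|c| + 1))).
  by rewrite lt_min e00 divr_gt0.
move=> e' /andP[h0 h1] i; rewrite inE => /orP[/eqP ->|iJ]; last first.
  by apply: he0 => //; rewrite h0 (le_trans h1) // ge_min lexx.
rewrite gj_shift -/c.
have h2 : e' <= gj j z / (`|c| + 1) by apply: (le_trans h1); rewrite ge_min lexx orbT.
have h3 : e' * (`|c| + 1) <= gj j z by rewrite -ler_pdivlMr.
have h4 : - `|c| <= c by rewrite lerNl ler_normr lexx orbT.
have h5 : 0 <= `|c| by [].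
nra.
Qed.

Definition negd (d : P) : P := (- d.1, - d.2).
Lemma crs_negd j d : crs j (negd d) = - crs j d. Proof. by rewrite /crs /=; ring. Qed.
Lemma shift_negd z d e : shift z (negd d) e = shift z d (- e).
Proof. by apply: pair_eq; rewrite /shift /=; ring. Qed.

Lemma flat (J : seq (P * P)) z d : Kset J z -> (d.1 != 0) || (d.2 != 0) ->
  (forall j, j \in J -> gj j z = 0 -> crs j d = 0) -> ~ extreme_pt (Kset J) z.
Proof.
move=> Kz dn hc [_ ext].
have hc1 : forall j, j \in J -> gj j z = 0 -> 0 <= crs j d.
  by move=> j jJ h; rewrite (hc j jJ h).
have hc2 : forall j, j \in J -> gj j z = 0 -> 0 <= crs j (negd d).
  by move=> j jJ h; rewrite crs_negd (hc j jJ h) oppr0.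
have [e1 e10 h1] := @eps_shift J z d Kz hc1.
have [e2 e20 h2] := @eps_shift J z (negd d) Kz hc2.
set e := Num.min e1 e2.
have e0 : 0 < e by rewrite lt_min e10 e20.
have ee1 : 0 <= e <= e1 by rewrite ltW //= ge_min lexx.
have ee2 : 0 <= e <= e2 by rewrite ltW //= ge_min lexx orbT.
have Ka : Kset J (shift z d e) by move=> j jJ; apply: h1.
have Kb : Kset J (shift z d (- e)) by move=> j jJ; rewrite -shift_negd; apply: h2.
have ab : shift z d e <> shift z d (- e).
  move=> h; move: dn; have := congr1 fst h; have := congr1 snd h; rewrite /shift /= => k2 k1.
  have -> : d.1 = 0 by nra.
  have -> : d.2 = 0 by nra.
  by rewrite eqxx.
apply: ab; apply: (ext _ _ (1 / 2)) => //.
  by rewrite divr_gt0 //= ltr_pdivrMr //; lra.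
by apply: pair_eq; rewrite /shift /=; field.
Qed.

Lemma ext_two (J : seq (P * P)) z : (forall j, j \in J -> j.1 <> j.2) -> extreme_pt (Kset J) z ->
  exists j1 j2, [/\ j1 \in J, j2 \in J, gj j1 z = 0, gj j2 z = 0 & crs j2 (dir j1) != 0].
Proof.
move=> hJ ext.
have Kz := ext.1.
have [j1 [j1J [g1 c1]]] : exists j1, j1 \in J /\ gj j1 z = 0 /\ crs j1 (1, 0) != 0.
  apply: contrapT => H; apply: (@flat J z (1, 0)) => //=; first by rewrite oner_eq0.
  move=> j jJ gz; apply/eqP; apply: contrapT => /negP cn; apply: H; by exists j.
have dn : ((dir j1).1 != 0) || ((dir j1).2 != 0).
  have [h1|h1] := eqVneq (dir j1).1 0; last by apply/orP; left.
  have [h2|h2] := eqVneq (dir j1).2 0; last by apply/orP; right.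
  exfalso; apply: (hJ j1 j1J); move: h1 h2; rewrite /dir /= => h1 h2.
  by apply: pair_eq; apply/eqP; rewrite eq_sym -subr_eq0; apply/eqP.
have [j2 [j2J [g2 c2]]] : exists j2, j2 \in J /\ gj j2 z = 0 /\ crs j2 (dir j1) != 0.
  apply: contrapT => H; apply: (@flat J z (dir j1)) => //.
  move=> j jJ gz; apply/eqP; apply: contrapT => /negP cn; apply: H; by exists j.
by exists j1, j2; split.
Qed.

Definition inter (j1 j2 : P * P) : P :=
  let a := j1.1 in let d1 := dir j1 in let b := j2.1 in let d2 := dir j2 in
  let D := d1.1 * d2.2 - d1.2 * d2.1 in
  let c1 := d1.1 * a.2 - d1.2 * a.1 in let c2 := d2.1 * b.2 - d2.2 * b.1 in
  ((c1 * d2.1 - c2 * d1.1) / D, (c1 * d2.2 - c2 * d1.2) / D).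

Lemma inter_eq j1 j2 z : gj j1 z = 0 -> gj j2 z = 0 -> crs j2 (dir j1) != 0 -> z = inter j1 j2.
Proof.
rewrite /gj /orient /crs /inter /dir /= => h1 h2 hc.
have D0 : (j1.2.1 - j1.1.1) * (j2.2.2 - j2.1.2) - (j1.2.2 - j1.1.2) * (j2.2.1 - j2.1.1) != 0.
  by apply: contra hc => /eqP h; apply/eqP; lra.
apply: pair_eq => /=; rewrite -[LHS](mulfK D0); congr (_ / _).
  have := congr1 (fun x => x * (j2.2.1 - j2.1.1)) h1.
  have := congr1 (fun x => x * (j1.2.1 - j1.1.1)) h2.
  rewrite /= !mul0r => k2 k1; nra.
have := congr1 (fun x => x * (j2.2.2 - j2.1.2)) h1.
have := congr1 (fun x => x * (j1.2.2 - j1.1.2)) h2.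
rewrite /= !mul0r => k2 k1; nra.
Qed.

End G7.

Section G8.
Variable R : realType.
Local Notation P := (pt R).

Definition cand (J : seq (P * P)) : seq P := [seq inter j1 j2 | j1 <- J, j2 <- J].
Definition Vp (J : seq (P * P)) : seq P :=
  undup (seq.filter (fun z => `[< extreme_pt (Kset J) z >]) (cand J)).

Lemma mem_Vp J z : (z \in Vp J) = (z \in cand J) && `[< extreme_pt (Kset J) z >].
Proof. by rewrite mem_undup mem_filter andbC. Qed.

Lemma Vp_ext J z : z \in Vp J -> extreme_pt (Kset J) z.
Proof. by rewrite mem_Vp => /andP[_ /asboolP]. Qed.

Lemma ext_in_Vp J z : (forall j, j \in J -> j.1 <> j.2) -> extreme_pt (Kset J) z -> z \in Vp J.
Proof.
move=> hJ ext; rewrite mem_Vp; apply/andP; split; last by apply/asboolP.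
have [j1 [j2 [j1J j2J g1 g2 c]]] := ext_two hJ ext.
by rewrite (inter_eq g1 g2 c); apply: allpairs_f.
Qed.

Definition bounded (X : set P) := exists B, forall z, X z -> `|z.1| <= B /\ `|z.2| <= B.

Definition inact (J : seq (P * P)) z := count (fun j => 0 < gj j z) J.

Lemma count_le_in (T : eqType) (a b : pred T) (s : seq T) :
  (forall x, x \in s -> a x -> b x) -> (count a s <= count b s)%N.
Proof.
elim: s => [//|y s IH] h /=.
rewrite leq_add //; last by apply: IH => x xs; apply: h; rewrite inE xs orbT.
by case ay: (a y) => //; rewrite (h y) // inE eqxx.
Qed.

Lemma count_lt_in (T : eqType) (a b : pred T) (s : seq T) :
  (forall x, x \in s -> a x -> b x) -> (exists2 x, x \in s & b x && ~~ a x) ->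
  (count a s < count b s)%N.
Proof.
elim: s => [|y s IH] h [x]; first by [].
have h' : forall x, x \in s -> a x -> b x by move=> z zs; apply: h; rewrite inE zs orbT.
rewrite inE => /orP[/eqP ->|xs] /andP[bx ax] /=.
  rewrite (negbTE ax) bx add0n add1n ltnS; exact: count_le_in.
rewrite -addnS; apply: leq_add; last by apply: IH => //; exists x => //; rewrite bx.
by case ay: (a y) => //; rewrite (h y) // inE eqxx.
Qed.

Lemma unbnd (x dx B : R) : dx != 0 -> `|x| <= B -> exists2 l, 0 <= l & B < `|x + l * dx|.
Proof.
move=> d0; rewrite ler_norml => /andP[h1 h2].
have [dp|dn] := ltP 0 dx.
  exists ((B - x + 1) / dx); first by apply: divr_ge0; lra.
  rewrite mulfVK ?gt_eqF //.
  have -> : x + (B - x + 1) = B + 1 by ring.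
  rewrite ger0_norm; lra.
have dn' : dx < 0 by rewrite lt_neqAle d0 dn.
exists ((x + B + 1) / - dx); first by apply: divr_ge0; lra.
have -> : x + (x + B + 1) / - dx * dx = - (B + 1).
  by field; rewrite ?oppr_eq0.
rewrite normrN ger0_norm; lra.
Qed.

Lemma step J z d : bounded (Kset J) -> Kset J z -> (d.1 != 0) || (d.2 != 0) ->
  (forall j, j \in J -> gj j z = 0 -> crs j d = 0) ->
  exists2 l, 0 < l & Kset J (shift z d l) /\ (inact J (shift z d l) < inact J z)%N.
Proof.
move=> [B hB] Kz dn hc.
set N := seq.filter (fun j => crs j d < 0) J.
have Nn : N != [::].
  apply/eqP => N0.
  have allc : forall j, j \in J -> 0 <= crs j d.
    move=> j jJ; rewrite leNgt; apply/negP => cn.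
    have jN : j \in N by rewrite mem_filter cn jJ.
    by rewrite N0 in jN.
  have Kl : forall l, 0 <= l -> Kset J (shift z d l).
    move=> l l0 j jJ; rewrite gj_shift; apply: addr_ge0; first exact: Kz.
    by apply: mulr_ge0 => //; apply: allc.
  have [bz1 bz2] := hB z Kz.
  case/orP: dn => dn.
    have [l l0 hl] := unbnd dn bz1.
    by have [+ _] := hB _ (Kl l l0); rewrite /shift /=; rewrite leNgt hl.
  have [l l0 hl] := unbnd dn bz2.
  by have [_ +] := hB _ (Kl l l0); rewrite /shift /=; rewrite leNgt hl.
pose f j := gj j z / - crs j d.
have [js jsN jmin] := argmin f Nn.
move: (jsN); rewrite mem_filter => /andP[cs jsJ].
have gs : 0 < gj js z.
  rewrite lt_neqAle Kz // andbT; apply/negP => /eqP/esym g0.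
  by move: cs; rewrite (hc js jsJ g0) ltxx.
have cs0 : 0 < - crs js d by rewrite oppr_gt0.
exists (f js); first by rewrite /f divr_gt0.
have Ksh : Kset J (shift z d (f js)).
  move=> j jJ; rewrite gj_shift.
  have [cn|cp] := ltP (crs j d) 0.
    have jN : j \in N by rewrite mem_filter cn jJ.
    have := jmin j jN; rewrite {2}/f => h.
    have cn' : 0 < - crs j d by rewrite oppr_gt0.
    move: h; rewrite ler_pdivlMr // => h; lra.
  apply: addr_ge0; first exact: Kz.
  by apply: mulr_ge0 => //; apply: ltW; rewrite /f divr_gt0.
split => //.
apply: count_lt_in.
  move=> j jJ /=; rewrite gj_shift => h.
  rewrite lt_neqAle Kz // andbT; apply/negP => /eqP/esym g0.
  by move: h; rewrite g0 (hc j jJ g0) mulr0 addr0 ltxx.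
exists js => //; rewrite gs /= gj_shift /f -leNgt.
have k : crs js d != 0 by rewrite lt_eqF.
have -> : gj js z + gj js z / - crs js d * crs js d = 0 by field.
by [].
Qed.

Lemma km_h J : (forall j, j \in J -> j.1 <> j.2) -> bounded (Kset J) ->
  Kset J `<=` phull (Vp J).
Proof.
move=> hJ bJ.
suff H : forall n z, (inact J z < n)%N -> Kset J z -> phull (Vp J) z.
  by move=> z Kz; apply: (H (inact J z).+1).
elim=> [//|n IH] z hn Kz.
case: (pselect (extreme_pt (Kset J) z)) => [ext|next].
  by apply: phull_mem; apply: ext_in_Vp.
have [a [b [t [Ka Kb t01 e ab]]]] : exists a b t, [/\ Kset J a, Kset J b, 0 < t < 1,
    z = pcomb t a b & a <> b].
  apply: contrapT => H; apply: next; split => // a b t ha hb ht e.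
  by apply: contrapT => ab; apply: H; exists a, b, t; split.
set d : P := (b.1 - a.1, b.2 - a.2).
have dn : (d.1 != 0) || (d.2 != 0).
  have [h1|h1] := eqVneq d.1 0; last by apply/orP; left.
  have [h2|h2] := eqVneq d.2 0; last by apply/orP; right.
  exfalso; apply: ab; move: h1 h2; rewrite /d /= => h1 h2.
  by apply: pair_eq; apply/eqP; rewrite eq_sym -subr_eq0; apply/eqP.
have hc : forall j, j \in J -> gj j z = 0 -> crs j d = 0.
  move=> j jJ; rewrite e /gj orient_affine => h.
  have := Ka j jJ; have := Kb j jJ; rewrite /gj => hb ha.
  move: t01 => /andP[t0 t1].
  have ga : orient j.1 j.2 a = 0 by nra.
  have gb : orient j.1 j.2 b = 0 by nra.
  have -> : crs j d = orient j.1 j.2 b - orient j.1 j.2 a by rewrite /crs /d /orient /=; ring.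
  by rewrite ga gb subrr.
have hc' : forall j, j \in J -> gj j z = 0 -> crs j (negd d) = 0.
  by move=> j jJ g0; rewrite crs_negd (hc j jJ g0) oppr0.
have dn' : ((negd d).1 != 0) || ((negd d).2 != 0) by rewrite /negd /= !oppr_eq0.
have [l1 l10 [K1 c1]] := step bJ Kz dn hc.
have [l2 l20 [K2 c2]] := step bJ Kz dn' hc'.
have p1 := IH _ (leq_trans c1 hn) K1.
have p2 := IH _ (leq_trans c2 hn) K2.
have -> : z = pcomb (l2 / (l1 + l2)) (shift z d l1) (shift z (negd d) l2).
  have k : l1 + l2 != 0 by rewrite gt_eqF // addr_gt0.
  by apply: pair_eq; rewrite /pcomb /shift /negd /=; field.
apply: phull_convex => //; apply/andP; split.
  by apply: divr_ge0; apply: ltW => //; rewrite addr_gt0.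
by rewrite ler_pdivrMr ?addr_gt0 // mul1r lerDr ltW.
Qed.

End G8.

Section G9.
Variable R : realType.
Local Notation P := (pt R).

Lemma count_big (T : Type) (a : pred T) (s : seq T) : count a s = (\sum_(x <- s) (a x : nat))%N.
Proof. by elim: s => [|x s IH]; rewrite ?big_nil ?big_cons //= IH. Qed.

Lemma sum_ge (T : eqType) (s : seq T) (f : T -> nat) c :
  (forall x, x \in s -> c <= f x)%N -> (c * size s <= \sum_(x <- s) f x)%N.
Proof.
elim: s => [|x s IH] h; first by rewrite muln0.
rewrite big_cons /= mulnS leq_add //; first by apply: h; rewrite inE eqxx.
by apply: IH => y ys; apply: h; rewrite inE ys orbT.
Qed.

Lemma sum_le (T : eqType) (s : seq T) (f : T -> nat) c :
  (forall x, x \in s -> f x <= c)%N -> (\sum_(x <- s) f x <= c * size s)%N.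
Proof.
elim: s => [|x s IH] h; first by rewrite big_nil.
rewrite big_cons /= mulnS leq_add //; first by apply: h; rewrite inE eqxx.
by apply: IH => y ys; apply: h; rewrite inE ys orbT.
Qed.

Lemma count2 (T : eqType) (a : pred T) (s : seq T) x y : x != y -> x \in s -> y \in s ->
  a x -> a y -> (2 <= count a s)%N.
Proof.
move=> xy; elim: s => [//|z s IH]; rewrite !inE => /orP[/eqP xz|xs] /orP[/eqP yz|ys] ax ay /=.
- by move: xy; rewrite xz yz eqxx.
- rewrite -xz ax add1n ltnS -has_count; apply/hasP; by exists y.
- rewrite -yz ay add1n ltnS -has_count; apply/hasP; by exists x.
- by apply: leq_trans (IH xs ys ax ay) _; rewrite leq_addl.
Qed.

Lemma crs_dir (j : P * P) : crs j (dir j) = 0.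
Proof. by rewrite /crs /dir /=; ring. Qed.

Lemma size_Vp (J : seq (P * P)) : (forall j, j \in J -> j.1 <> j.2) -> (size (Vp J) <= size J)%N.
Proof.
move=> hJ.
have H1 : forall v, v \in Vp J -> (2 <= count (fun j => gj j v == 0%R) J)%N.
  move=> v /Vp_ext ext.
  have [j1 [j2 [j1J j2J g1 g2 c]]] := ext_two hJ ext.
  apply: (count2 (x := j1) (y := j2)) => //; try by apply/eqP.
  by apply/eqP => e; move: c; rewrite -e crs_dir eqxx.
have H2 : forall j, j \in J -> (count (fun v => gj j v == 0%R) (Vp J) <= 2)%N.
  move=> j jJ; rewrite leqNgt; apply/negP => h3.
  set F := seq.filter (fun v => gj j v == 0%R) (Vp J).
  have uF : uniq F by apply: filter_uniq; apply: undup_uniq.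
  have sF : (3 <= size F)%N by rewrite size_filter.
  have memF : forall v, v \in F -> extreme_pt (Kset J) v /\ orient j.1 j.2 v = 0.
    by move=> v; rewrite mem_filter => /andP[/eqP g vV]; split => //; apply: Vp_ext.
  move: uF sF memF; case: F => [|a [|b [|c F']]] //= /andP[]; rewrite !inE !negb_or.
  move=> /and3P[ab ac _] /andP[/andP[bc _] _] _ memF.
  have aF : a \in [:: a, b, c & F'] by rewrite !inE eqxx.
  have bF : b \in [:: a, b, c & F'] by rewrite !inE eqxx ?orbT.
  have cF : c \in [:: a, b, c & F'] by rewrite !inE eqxx ?orbT.
  have [ea oa] := memF a aF.
  have [eb ob] := memF b bF.
  have [ec oc] := memF c cF.
  apply: (three_ext (hJ j jJ) oa ob oc _ _ _ ea eb ec); by apply/eqP.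
have e : (\sum_(v <- Vp J) count (fun j => gj j v == 0%R) J =
          \sum_(j <- J) count (fun v => gj j v == 0%R) (Vp J))%N.
  under eq_bigr => v _ do rewrite count_big.
  rewrite exchange_big /=.
  by apply: eq_bigr => j _; rewrite count_big.
have := sum_ge H1; rewrite e => h.
have := leq_trans h (sum_le H2).
by rewrite leq_pmul2l.
Qed.

Lemma phull_Vp (J : seq (P * P)) : (forall j, j \in J -> j.1 <> j.2) -> bounded (Kset J) ->
  phull (Vp J) = Kset J.
Proof.
move=> hJ bJ; rewrite eqEsubset; split; last exact: km_h.
apply: phull_sub; first exact: Kset_convex.
by move=> z /Vp_ext [].
Qed.

Lemma half01 : (0 <= 1 / 2 :> R) && (1 / 2 <= 1 :> R).
Proof. apply/andP; split; lra. Qed.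

Lemma edge_line (J : seq (P * P)) (a b : P) : poly_edge (Kset J) a b ->
  exists2 j, j \in J & gj j a = 0 /\ gj j b = 0.
Proof.
move=> [ab [[Ka _] [[Kb _] [u [c [u0 [ua [ub hu]]]]]]]].
set m := pcomb (1 / 2) a b.
have Km : Kset J m.
  by apply: Kset_convex => //; exact: half01.
have [j jJ gm] : exists2 j, j \in J & gj j m = 0.
  apply: contrapT => H.
  have hc : forall j, j \in J -> gj j m = 0 -> 0 <= crs j u.
    by move=> j jJ g0; exfalso; apply: H; exists j.
  have [e e0 he] := eps_shift Km hc.
  have := hu _ (fun j jJ => he e _ j jJ); rewrite lexx ltW //= => /(_ isT).
  move=> h; apply: u0; rewrite /shift /m /pcomb /= in h.
  have hm : u.1 * (1 / 2 * a.1 + (1 - 1 / 2) * b.1) + u.2 * (1 / 2 * a.2 + (1 - 1 / 2) * b.2) = c.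
    apply/eqP; rewrite -subr_eq0.
    have -> : u.1 * (1 / 2 * a.1 + (1 - 1 / 2) * b.1) + u.2 * (1 / 2 * a.2 + (1 - 1 / 2) * b.2) - c
      = ((u.1 * a.1 + u.2 * a.2 - c) + (u.1 * b.1 + u.2 * b.2 - c)) / 2 by field.
    by rewrite ua ub subrr add0r mul0r.
  have h' : e * (u.1 * u.1 + u.2 * u.2) <= 0.
    by move: h; rewrite -hm => h; clear -h e0; nra.
  have hs : u.1 * u.1 + u.2 * u.2 <= 0 by move: h'; rewrite pmulr_rle0.
  by apply: pair_eq; rewrite /=; clear -hs; nra.
exists j => //.
move: gm; rewrite /m /gj orient_affine.
have := Ka j jJ; have := Kb j jJ; rewrite /gj => hb ha h.
by clear -ha hb h; split; nra.
Qed.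

End G9.

Section G10.
Variable R : realType.
Local Notation P := (pt R).

Lemma fin_coord (x a sp sm be mu1 : R) :
  x = a + 0 * (sp - a) + be * (sm - a) -> sm = x + mu1 * (a - x) -> 1 <= mu1 -> 0 <= be -> sm = a.
Proof.
move=> e1 e2 mu11 be0.
have h1 : x - a = be * (sm - a) by rewrite e1; ring.
have h2 : sm - a = (1 - mu1) * (x - a) by rewrite {1}e2; ring.
rewrite h1 in h2.
have h3 : (sm - a) * (1 + (mu1 - 1) * be) = 0.
  by rewrite mulrDr mulr1 {1}h2; ring.
have f0 : 1 + (mu1 - 1) * be != 0.
  have : 0 <= (mu1 - 1) * be by apply: mulr_ge0 => //; rewrite subr_ge0.
  by move=> h; rewrite gt_eqF //; lra.
by apply/eqP; rewrite -subr_eq0; move/eqP: h3; rewrite mulf_eq0 (negbTE f0) orbF.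
Qed.

Lemma hrep (V : seq P) (x : P) : (forall v, v \in V -> extreme_pt (phull V) v) -> NC V ->
  (forall a, a \in V -> exists ap, [/\ ap \in V, ap <> a,
       forall y, y \in V -> 0 <= orient a ap y & 0 <= orient a ap x]) ->
  phull V x.
Proof.
move=> extV ncV hV; apply: contrapT => hx.
have Vn : V != [::].
  have q1 : x <> (x.1 + 1, x.2).
    by move=> /(congr1 fst) /= /eqP; rewrite eq_sym -subr_eq0 addrAC subrr add0r oner_eq0.
  by have [z zV _] := ncV _ _ q1; apply/eqP => e; rewrite e in zV.
have sg1 : (1 : R) ^+ 2 = 1 by rewrite expr1n.
have [a aV ha] := tan sg1 Vn hx.
have [sp [sm [spV smV sps sms [hsp hsm c0 _]]]] := eav aV (extV a aV) ncV.
have [ap [apV apa hap hapx]] := hV a aV.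
have [mu mu0 hmu] := uniq_edge (extV a aV) apV spV apa sps hap hsp.
have x1 : 0 <= orient a sp x by rewrite hmu; apply: mulr_ge0 => //; apply: ltW.
have [ap2 [ap2V ap2a hap2 hap2x]] := hV sm smV.
have asm : a <> sm by move=> e; apply: sms; rewrite e.
have [mu2 mu20 hmu2] := uniq_edge (extV sm smV) ap2V aV ap2a asm hap2 hsm.
have x2 : 0 <= orient sm a x by rewrite hmu2; apply: mulr_ge0 => //; apply: ltW.
have [al [be [al0 be0 ex]]] := cone_dec c0 x1 x2.
have [k1 _] := ha sm smV; rewrite mul1r in k1.
have al00 : al = 0.
  have e : orient x a sm = - al * orient a sp sm by rewrite ex /orient /=; ring.
  move: k1; rewrite e => k1.
  have k1' : al * orient a sp sm <= 0 by rewrite mulNr oppr_ge0 in k1.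
  rewrite pmulr_lle0 // in k1'.
  by apply/eqP; rewrite eq_le k1' al0.
have [k2 h2] := ha sm smV.
have k20 : orient x a sm = 0.
  by rewrite ex al00 /orient /=; ring.
have [mu1 mu11 esm] := h2 k20.
apply: sms; apply: pair_eq.
  have := congr1 fst esm; have := congr1 fst ex; rewrite /ray al00 /= => e1 e2.
  exact: (fin_coord e1 e2 mu11 be0).
have := congr1 snd esm; have := congr1 snd ex; rewrite /ray al00 /= => e1 e2.
exact: (fin_coord e1 e2 mu11 be0).
Qed.

End G10.

Section G11.
Variable R : realType.
Local Notation P := (pt R).

Lemma NC_nonempty (T : seq P) : NC T -> T != [::].
Proof.
move=> nc; have q1 : (0 : P) <> (1, 0).
  by move=> /(congr1 fst) /= /eqP; rewrite eq_sym oner_eq0.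
by have [z zT _] := nc _ _ q1; apply/eqP => e; rewrite e in zT.
Qed.

Lemma per_vertex (V W : seq P) (a : P) : a \in V ->
  (forall v, v \in V -> extreme_pt (phull V) v) -> NC V -> NC W ->
  (forall w, w \in W -> extreme_pt (phull W) w) -> (forall w, w \in W -> phull V w) ->
  exists ap (j1 j2 : P * P), [/\ ap \in V, ap <> a, (forall y, y \in V -> 0 <= orient a ap y),
     [/\ j1.1 <> j1.2, j2.1 <> j2.2, j1.1 \in W, j1.2 \in W &
        [/\ j2.1 \in W, j2.2 \in W, forall z, z \in W -> 0 <= gj j1 z &
            forall z, z \in W -> 0 <= gj j2 z]] &
     forall z, 0 <= gj j1 z -> 0 <= gj j2 z -> 0 <= orient a ap z].
Proof.
move=> aV extV ncV ncW extW WV.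
have [ap [am [apV amV apa ama [hap ham c0 _]]]] := eav aV (extV a aV) ncV.
have [w wW wmin] := argmin (orient a ap) (NC_nonempty ncW).
have [wp [wm [wpW wmW wpw wmw [hwp hwm cw _]]]] := eav wW (extW w wW) ncW.
have Lw : 0 <= orient a ap w.
  exact: (phull_sub (@convex_ge R (orient a ap) 0 (orient_affine a ap)) hap (WV w wW)).
exists ap, (w, wp), (wm, w); split => //.
  split => //=; try exact: wmw.
  by move=> e; apply: wpw; rewrite e.
move=> z /= h1 h2.
have [al [be [al0 be0 ez]]] := cone_dec cw h1 h2.
rewrite ez orient_lin.
have := wmin wp wpW; have := wmin wm wmW => m1 m2.
have : 0 <= al * (orient a ap wp - orient a ap w) by apply: mulr_ge0; lra.
have : 0 <= be * (orient a ap wm - orient a ap w) by apply: mulr_ge0; lra.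
lra.
Qed.

Lemma buildJ (V W : seq P) :
  (forall v, v \in V -> extreme_pt (phull V) v) -> NC V -> NC W ->
  (forall w, w \in W -> extreme_pt (phull W) w) -> (forall w, w \in W -> phull V w) ->
  forall V0, {subset V0 <= V} -> exists J : seq (P * P), [/\ size J = (2 * size V0)%N,
     forall j, j \in J -> [/\ j.1 <> j.2, j.1 \in W, j.2 \in W & forall z, z \in W -> 0 <= gj j z] &
     forall a, a \in V0 -> exists ap, [/\ ap \in V, ap <> a, forall y, y \in V -> 0 <= orient a ap y &
        forall z, Kset J z -> 0 <= orient a ap z]].
Proof.
move=> extV ncV ncW extW WV; elim=> [|a V0 IH] sub.
  by exists [::]; split.
have sub' : {subset V0 <= V} by move=> x xV; apply: sub; rewrite inE xV orbT.
have [J [sJ hJ hV0]] := IH sub'.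
have aV : a \in V by apply: sub; rewrite inE eqxx.
have [ap [j1 [j2 [apV apa hap [n1 n2 i1 i2 [i3 i4 g1 g2]] hc]]]] := per_vertex aV extV ncV ncW extW WV.
exists [:: j1, j2 & J]; split.
- by rewrite /= sJ mulnS.
- move=> j; rewrite !inE => /orP[/eqP ->|/orP[/eqP ->|jJ]]; [by split|by split|exact: hJ].
- move=> b; rewrite inE => /orP[/eqP ->|bV0].
    exists ap; split => // z Kz; apply: hc; apply: Kz; by rewrite !inE eqxx ?orbT.
  have [bp [bpV bpb hbp hbz]] := hV0 b bV0.
  exists bp; split => // z Kz; apply: hbz => j jJ; apply: Kz; by rewrite !inE jJ !orbT.
Qed.

Lemma sum_abs_ge (V : seq P) v : v \in V ->
  `|v.1| + `|v.2| <= \sum_(w <- V) (`|w.1| + `|w.2|).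
Proof.
elim: V => [//|x V IH]; rewrite inE big_cons => /orP[/eqP ->|vV].
  by rewrite lerDl sumr_ge0 // => i _; rewrite addr_ge0.
by rewrite (le_trans (IH vV)) // lerDr addr_ge0.
Qed.

Lemma phull_bounded (V : seq P) : bounded (phull V).
Proof.
set B := \sum_(w <- V) (`|w.1| + `|w.2|).
exists B.
have cb : pconvex [set z : P | `|z.1| <= B /\ `|z.2| <= B].
  move=> a b t [ha1 ha2] [hb1 hb2] /andP[t0 t1] /=.
  move: ha1 ha2 hb1 hb2; rewrite !ler_norml => /andP[a1 a2] /andP[a3 a4] /andP[b1 b2] /andP[b3 b4].
  by split; apply/andP; split; nra.
apply: phull_sub => // v vV; have := sum_abs_ge vV; rewrite -/B => h.
by split; apply: le_trans h; rewrite ?lerDl ?lerDr.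
Qed.

Lemma no3 (X : set P) (p q : P) (s : seq P) : p <> q -> uniq s -> (3 <= size s)%N ->
  (forall w, w \in s -> extreme_pt X w /\ orient p q w = 0) -> False.
Proof.
move=> pq; case: s => [|a [|b [|c F']]] //= /andP[]; rewrite !inE !negb_or.
move=> /and3P[ab ac _] /andP[/andP[bc _] _] _ memF.
have aF : a \in [:: a, b, c & F'] by rewrite !inE eqxx.
have bF : b \in [:: a, b, c & F'] by rewrite !inE eqxx ?orbT.
have cF : c \in [:: a, b, c & F'] by rewrite !inE eqxx ?orbT.
have [ea oa] := memF a aF.
have [eb ob] := memF b bF.
have [ec oc] := memF c cF.
apply: (three_ext pq oa ob oc _ _ _ ea eb ec); by apply/eqP.
Qed.

End G11.

Theorem lemma3p4 (R : realType) (P : seq (pt R)) (C : set (pt R)) (V : seq (pt R)) :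
  convex_body C ->
  polygon_vertices V ->
  (forall p, p \in P -> C p -> phull V p) ->
  phull V `<=` C ->
  exists V' : seq (pt R),
    polygon_vertices V' /\
    (forall p, p \in P -> C p -> phull V' p) /\
    phull V' `<=` phull V /\
    (size V' <= 2 * size V)%N /\
    (forall a b, poly_edge (phull V') a b ->
       exists p q, [/\ p \in P, q \in P, p <> q, on_line p q a & on_line p q b]).
Proof.
move=> _ [uV extV] hPC _.
set S := seq.filter (fun p => `[< C p >]) P.
have hS : forall p, p \in S -> p \in P /\ C p.
  by move=> p; rewrite mem_filter => /andP[/asboolP ? ?].
have hS' : forall p, p \in P -> C p -> p \in S.
  by move=> p pP Cp; rewrite mem_filter pP andbT; apply/asboolP.
have SV : forall z, z \in S -> phull V z by move=> z /hS [zP Cz]; apply: hPC.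
set W := extl S.
have WS : {subset W <= S} := @extl_sub R S.
have extW : forall w, w \in W -> extreme_pt (phull W) w := @extl_ext R S.
have SW : forall z, z \in S -> phull W z := @km_v R S.
have WP : forall w, w \in W -> w \in P by move=> w /WS /hS [].
have WV : forall w, w \in W -> phull V w by move=> w /WS /SV.
case: (pselect (NC S)) => ncS; last first.
  have [p [q [pq hl]]] : exists p q, p <> q /\ forall z, z \in S -> orient p q z = 0.
    apply: contrapT => H; apply: ncS => p q pq; apply: contrapT => H2; apply: H.
    exists p, q; split => // z zS; apply/eqP; apply: contrapT => /negP nz; apply: H2.
    by exists z.
  have sW : (size W <= 2)%N.
    rewrite leqNgt; apply/negP => h3.
    apply: (@no3 R (phull W) p q W pq (extl_uniq S) h3) => w wW.
    by split; [apply: extW | apply: hl; apply: WS].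
  exists W; split; first by split; [exact: extl_uniq | exact: extW].
  split; first by move=> p0 pP Cp; apply: SW; apply: hS'.
  split; first by apply: phull_subh; exact: WV.
  split.
    have [W0|Wn] := eqVneq W [::]; first by rewrite W0.
    apply: (leq_trans sW); apply: leq_pmulr.
    case: (W) Wn (WV) => [//|w W'] _ /(_ w (mem_head _ _)).
    by case: (V) => [/phull_nil //|].
  move=> a b [ab [ea [eb _]]]; exists a, b; split => //.
  - by apply: WP; apply: ext_in.
  - by apply: WP; apply: ext_in.
  - exact: (orient_x0 a b).
  - exact: (orient_xx a b).
have ncW : NC W := NC_hull ncS SW.
have ncV : NC V := NC_hull ncS SV.
have [J [sJ hJ hV]] := buildJ extV ncV ncW extW WV (fun x (h : x \in V) => h).
have hJ12 : forall j, j \in J -> j.1 <> j.2 by move=> j /hJ [].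
have KV : Kset J `<=` phull V.
  move=> z Kz; apply: hrep extV ncV _ => a aV.
  have [ap [apV apa hap hz]] := hV a aV.
  by exists ap; split => //; apply: hz.
have bK : bounded (Kset J).
  have [B hB] := phull_bounded V.
  by exists B => z Kz; apply: hB; apply: KV.
have eqK := phull_Vp hJ12 bK.
have SK : forall z, z \in S -> Kset J z.
  move=> z zS j jJ; have [_ _ _ gW] := hJ j jJ.
  exact: (phull_sub (@convex_ge R (orient j.1 j.2) 0 (orient_affine j.1 j.2)) gW (SW z zS)).
exists (Vp J); split.
  split; first exact: undup_uniq.
  by move=> v vV; rewrite eqK; apply: Vp_ext.
split; first by move=> p pP Cp; rewrite eqK; apply: SK; apply: hS'.
split; first by rewrite eqK.
split; first by rewrite -sJ; apply: size_Vp.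
move=> a b; rewrite eqK => /edge_line [j jJ [ga gb]].
have [n i1 i2 _] := hJ j jJ.
by exists j.1, j.2; split => //; apply: WP.
Qed.
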